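(* Let $B',B\in\mathcal X_{N-2}$ with $B'\preceq B$. If $B\in\mathcal X^+_{N-2}$, then $B'\in\mathcal X^+_{N-2}$.
   Context: Let $N\ge 3$ be an odd integer and $F=\mathbb Z/2\mathbb Z$. For integers $i,j$ let $[i,j]=\{h\in\mathbb Z: i\le h\le j\}$ (empty if $i>j$). Let $S_N=[1,N]$. The set of all subsets of $S_N$ is an $F$-vector space with sum $X+X'=(X\cup X')-(X\cap X')$; let $E_N$ be the subspace of subsets of even cardinality. A $2$-element subset $\{i,j\}\subseteq S_N$ is written $ij$ when either ($i<j$ and $j-i$ odd) or ($i>j$ and $i-j$ even); each $2$-element subset has exactly one such writing. Let $\mathcal P_N$ be the set of all finite sets $B$ of pairwise disjoint $2$-element subsets of $S_N$; for $B\in\mathcal P_N$ let $\langle B\rangle$ be the $F$-subspace of $E_N$ spanned by the elements of $B$, $\mathrm{supp}(B)=\bigcup_{X\in B}X$, $B^0=\{\{i,j\}\in B: i-j\text{ even}\}$, $B^1=\{\{i,j\}\in B: i-j\text{ odd}\}$. A set $X\subseteq S_N$ is $0$-covered (resp. $1$-covered) by $B^1$ if there are $a_1b_1,\dots,a_sb_s\in B^1$ ($s\ge 0$, so $a_r<b_r$) with $X=[a_1,b_1]\sqcup\dots\sqcup[a_s,b_s]$ (resp. $X=[a_1,b_1]\sqcup\dots\sqcup[a_s,b_s]\sqcup\{u\}$ for some $u$), disjoint unions. Let ${}^*\mathcal P_N$ be the set of $B\in\mathcal P_N$ such that: for every $ij\in B^1$ the set $[i+1,j-1]$ is $0$-covered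 by $B^1$; and there is a sequence $i_*(B)=(i_1,\dots,i_{2s})$ in $S_N$ with $B^0=\{i_{2s}i_1,i_{2s-1}i_2,\dots,i_{s+1}i_s\}$ (so $s=|B^0|$; the sequence is unique) such that, if $s\ge1$, each of $[i_1+1,i_2-1],\dots,[i_{s-1}+1,i_s-1],[i_{s+1}+1,i_{s+2}-1],\dots,[i_{2s-1}+1,i_{2s}-1]$ is $0$-covered by $B^1$. For $B\in{}^*\mathcal P_N$ with $i_*(B)=(i_1,\dots,i_{2s})$ consider: (I) $s=0$, or $s\ge1$ and $[1,i_1-1]$ and $[i_{2s}+1,N]$ are $0$-covered by $B^1$; (II) $N\notin\mathrm{supp}(B)$ and either $s=0$, or $s$ is odd and either (i) $[1,i_1-1]$ is $1$-covered and $[i_{2s}+1,N-1]$ is $0$-covered by $B^1$, or (ii) $[1,i_1-1]$ is $0$-covered and $[i_{2s}+1,N-1]$ is $1$-covered by $B^1$; (III) (I) holds and, if $s$ is even then $\{i,N\}\in B$ for some even $i$, if $s$ is odd then $\{i,N\}\in B$ for some odd $i$. Let $\mathcal X^+_{N-2}$, $\mathcal X^-_{N-2}$ be the sets of $B\in{}^*\mathcal P_N$ satisfying (II), (III) respectively, and $\mathcal X_{N-2}=\mathcal X^+_{N-2}\sqcup\mathcal X^-_{N-2}$. For $B\in\mathcal X^+_{N-2}$ with $s\ge1$ there is a unique $u_B$: in case (i), $u_B\in[1,i_1-1]$ with $[1,u_B-1]$, $[u_B+1,i_1-1]$ $0$-covered by $B^1$ ($u_B$ odd); in case (ii), $u_B\in[i_{2s}+1,N-1]$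 with $[i_{2s}+1,u_B-1]$, $[u_B+1,N-1]$ $0$-covered by $B^1$ ($u_B$ even). Put $[[ij]]=[i,j]$ if $i<j$ and $[[ij]]=[i,N]\cup[1,j]$ if $i>j$. For $B\in\mathcal X_{N-2}$ define ${}'\epsilon(B)\in E_N$: ${}'\epsilon(B)=\sum_{ij\in B}[[ij]]$ if $B\in\mathcal X^-_{N-2}$ or if $B\in\mathcal X^+_{N-2}$ with $|B^0|=0$; ${}'\epsilon(B)=\sum_{ij\in B}[[ij]]+[u_B,N]$ if $B\in\mathcal X^+_{N-2}$, $|B^0|$ odd, $u_B$ even; ${}'\epsilon(B)=\sum_{ij\in B}[[ij]]+\{N\}+[1,u_B]$ if $B\in\mathcal X^+_{N-2}$, $|B^0|$ odd, $u_B$ odd. For $B,B'\in\mathcal X_{N-2}$ write $B'\preceq B$ if there is a sequence $B'=B_0,\dots,B_h=B$ ($h\ge0$) in $\mathcal X_{N-2}$ with ${}'\epsilon(B_k)\in\langle B_{k+1}\rangle$ for $k=0,\dots,h-1$. *)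

(* Defs.v *)
(* Elements of S_N = [1,N] are the ordinals of 'I_N.+1 with
   nonzero value; value 0 is never used. *)
From HB Require Import structures.
From mathcomp Require Import all_boot all_order.
Set Implicit Arguments. Unset Strict Implicit. Unset Printing Implicit Defensive.

Section Defs.
Variable N : nat.
Local Notation T := 'I_N.+1.

(* sum in the F_2-vector space of subsets: symmetric difference *)
Definition symd (A B : {set T}) : {set T} := (A :\: B) :|: (B :\: A).

Lemma symdA : associative symd.
Proof.
move=> A B C; apply/setP=> x; rewrite !inE.
by case: (x \in A); case: (x \in B); case: (x \in C).
Qed.
Lemma symdC : commutative symd.
Proof. by move=> A B; apply/setP=> x; rewrite !inE orbC. Qed.
Lemma sym0d : left_id set0 symd.
Proof. by move=> A; apply/setP=> x; rewrite !inE; case: (x \in A). Qed.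

End Defs.

HB.instance Definition _ (N : nat) :=
  Monoid.isComLaw.Build {set 'I_N.+1} set0 (@symd N) (@symdA N) (@symdC N) (@sym0d N).

Section Defs2.
Variable N : nat.
Local Notation T := 'I_N.+1.

Definition SN : {set T} := [set h : T | 0 < h].

Definition itv (i j : nat) : {set T} := [set h : T | [&& 0 < h, i <= h & h <= j]].

(* the 2-element subset {i,j} is written "ij" *)
Definition writ (i j : nat) : bool :=
  ((i < j) && odd (j - i)) || ((j < i) && ~~ odd (i - j)).

Definition PN (B : {set {set T}}) : Prop :=
  (forall X, X \in B -> X \subset SN /\ #|X| = 2) /\
  (forall X Y, X \in B -> Y \in B -> X != Y -> [disjoint X & Y]).

Definition inB (B : {set {set T}}) (i j : T) : bool := ([set i; j] \in B) && writ i j.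
Definition inB1 (B : {set {set T}}) (i j : T) : bool := inB B i j && odd (j - i).
Definition inB0 (B : {set {set T}}) (i j : T) : bool := [&& inB B i j, j < i & ~~ odd (i - j)].

Definition supp (B : {set {set T}}) : {set T} := \bigcup_(X in B) X.

Definition B1union (B : {set {set T}}) (P : {set T * T}) : bool :=
  [forall p in P, inB1 B p.1 p.2] &&
  [forall p in P, forall q in P,
      (p != q) ==> [disjoint itv p.1 p.2 & itv q.1 q.2]].

Definition cov0 (B : {set {set T}}) (X : {set T}) : Prop :=
  exists P : {set T * T}, B1union B P /\ X = \bigcup_(p in P) itv p.1 p.2.

Definition cov1 (B : {set {set T}}) (X : {set T}) : Prop :=
  exists (P : {set T * T}) (u : T), B1union B P /\
    u \notin \bigcup_(p in P) itv p.1 p.2 /\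
    X = (\bigcup_(p in P) itv p.1 p.2) :|: [set u].

(* i_k of the sequence s = (i_1, ..., i_{2s}), 1-based *)
Definition ik (s : seq nat) (k : nat) : nat := nth 0 s k.-1.
Definition hs (s : seq nat) : nat := (size s)./2.

Definition is_iseq (B : {set {set T}}) (s : seq nat) : Prop :=
  sorted ltn s /\ all (fun x => 0 < x <= N) s /\ ~~ odd (size s) /\
  (forall i j : T, inB0 B i j <->
     exists2 k, 1 <= k <= hs s & (nat_of_ord i = ik s ((size s).+1 - k) /\
                                  nat_of_ord j = ik s k)).

Definition starP_with (B : {set {set T}}) (s : seq nat) : Prop :=
  PN B /\
  (forall i j : T, inB1 B i j -> cov0 B (itv i.+1 j.-1)) /\
  is_iseq B s /\
  (forall k, 1 <= k < size s -> k != hs s ->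
     cov0 B (itv (ik s k).+1 (ik s k.+1).-1)).

Definition condI (B : {set {set T}}) (s : seq nat) : Prop :=
  hs s = 0 \/
  (cov0 B (itv 1 (ik s 1).-1) /\ cov0 B (itv (ik s (size s)).+1 N)).

Definition caseI (B : {set {set T}}) (s : seq nat) : Prop :=
  cov1 B (itv 1 (ik s 1).-1) /\ cov0 B (itv (ik s (size s)).+1 N.-1).
Definition caseII (B : {set {set T}}) (s : seq nat) : Prop :=
  cov0 B (itv 1 (ik s 1).-1) /\ cov1 B (itv (ik s (size s)).+1 N.-1).

Definition condII (B : {set {set T}}) (s : seq nat) : Prop :=
  (ord_max : T) \notin supp B /\
  (hs s = 0 \/ (odd (hs s) /\ (caseI B s \/ caseII B s))).

Definition condIII (B : {set {set T}}) (s : seq nat) : Prop :=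
  condI B s /\
  (~~ odd (hs s) -> exists i : T, ~~ odd i /\ [set i; ord_max] \in B) /\
  (odd (hs s) -> exists i : T, odd i /\ [set i; ord_max] \in B).

Definition Xplus (B : {set {set T}}) : Prop :=
  exists s, starP_with B s /\ condII B s.
Definition Xminus (B : {set {set T}}) : Prop :=
  exists s, starP_with B s /\ condIII B s.
Definition inX (B : {set {set T}}) : Prop := Xplus B \/ Xminus B.

Definition uB_spec (B : {set {set T}}) (s : seq nat) (u : nat) : Prop :=
  (caseI B s /\ 1 <= u <= (ik s 1).-1 /\
     cov0 B (itv 1 u.-1) /\ cov0 B (itv u.+1 (ik s 1).-1)) \/
  (caseII B s /\ (ik s (size s)).+1 <= u <= N.-1 /\
     cov0 B (itv (ik s (size s)).+1 u.-1) /\ cov0 B (itv u.+1 N.-1)).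

Definition brk (i j : nat) : {set T} :=
  if i < j then itv i j else itv i N :|: itv 1 j.

Definition sumbrk (B : {set {set T}}) : {set T} :=
  \big[@symd N/set0]_(p : T * T | inB B p.1 p.2) brk p.1 p.2.

Definition eps (B : {set {set T}}) (Y : {set T}) : Prop :=
  (Xminus B /\ Y = sumbrk B) \/
  (exists s, starP_with B s /\ condII B s /\ hs s = 0 /\ Y = sumbrk B) \/
  (exists s u, starP_with B s /\ condII B s /\ odd (hs s) /\ uB_spec B s u /\
     ((~~ odd u /\ Y = symd (sumbrk B) (itv u N)) \/
      (odd u /\ Y = symd (symd (sumbrk B) [set ord_max]) (itv 1 u)))).

Definition span (B : {set {set T}}) : {set {set T}} :=
  [set \big[@symd N/set0]_(X in C) X | C : {set {set T}} in powerset B].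

Definition preceq (B' B : {set {set T}}) : Prop :=
  exists (h : nat) (f : nat -> {set {set T}}),
    f 0 = B' /\ f h = B /\ (forall k, k <= h -> inX (f k)) /\
    (forall k, k < h -> exists Y, eps (f k) Y /\ Y \in span (f k.+1)).

End Defs2.

(* Main.v *)
Require Import Defs.
From HB Require Import structures.
From mathcomp Require Import all_boot all_order zify.
Set Implicit Arguments. Unset Strict Implicit. Unset Printing Implicit Defensive.

Section S.
Variable N : nat.
Local Notation T := 'I_N.+1.

Lemma mem_symd_big (I : finType) (P : pred I) (F : I -> {set T}) (x : T) :
  (x \in \big[@symd N/set0]_(i | P i) F i) = odd #|[set i | P i && (x \in F i)]|.
Proof.
rewrite -sum1dep_card big_mkcondr /=.
rewrite (big_morph (fun A : {set T} => x \in A) (id1 := false) (op1 := addb)); last first.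
- by rewrite inE.
- by move=> A B; rewrite !inE; case: (x \in A); case: (x \in B).
rewrite (big_morph odd (id1 := false) (op1 := addb)) //; last by move=> a b; rewrite oddD.
by apply: eq_bigr => i _; case: (x \in F i).
Qed.

Lemma notmax_span (B : {set {set T}}) Y :
  (ord_max : T) \notin supp B -> Y \in span B -> (ord_max : T) \notin Y.
Proof.
move=> Hs /imsetP[C]; rewrite inE => /subsetP HC ->.
rewrite mem_symd_big; apply/negP => Hc.
have : #|[set X | (X \in C) && ((ord_max:T) \in X)]| = 0.
  apply/eqP; rewrite cards_eq0; apply/eqP/setP => X; rewrite !inE.
  apply/negP => /andP[XC mX]; apply/negP: Hs; apply/negPn/bigcupP; exists X => //.
  exact: HC.
by move=> H; rewrite H in Hc.
Qed.

Lemma half_le n : n./2 <= n. Proof. lia. Qed.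
Lemma card_B0 (B : {set {set T}}) s :
  is_iseq B s -> #|[set p : T * T | inB0 B p.1 p.2]| = hs s.
Proof.
move=> [srt [alls [_ Heq]]].
have uq : uniq s by apply: (sorted_uniq ltn_trans ltnn).
have bnd : forall k, k < size s -> nth 0 s k <= N.
  move=> k ks; have /allP/(_ _ (mem_nth 0 ks)) := alls; by case/andP.
have hsle : hs s <= size s by rewrite /hs; lia.
pose f (k : 'I_(hs s)) : T * T :=
  (inord (nth 0 s (size s - k.+1)), inord (nth 0 s k)).
have finj : injective f.
  move=> a b [_ /(congr1 val)]; rewrite /= !inordK; last 2 first.
  - by rewrite ltnS bnd // (leq_trans (ltn_ord b)).
  - by rewrite ltnS bnd // (leq_trans (ltn_ord a)).
  move/eqP; rewrite nth_uniq //; last 2 first.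
  - exact: (leq_trans (ltn_ord a)).
  - exact: (leq_trans (ltn_ord b)).
  by move/eqP=> H; apply: val_inj.
have -> : [set p : T * T | inB0 B p.1 p.2] = f @: setT.
  apply/setP => -[i j]; rewrite inE /=; apply/idP/imsetP.
  - move/(Heq i j) => [k /andP[k1 k2] [ei ej]].
    have kl : k.-1 < hs s by lia.
    exists (Ordinal kl) => //; rewrite /f /=.
    have e1 : (size s).+1 - k = (size s - (k.-1).+1).+1 by lia.
    congr (_, _); apply: val_inj; rewrite /= inordK.
    + by rewrite ei /ik e1.
    + rewrite ltnS bnd //; lia.
    + by rewrite ej /ik.
    + rewrite ltnS bnd //; lia.
  - move=> [k _ [-> ->]]; apply/(Heq _ _); exists k.+1.
    + by rewrite /= ltn_ord.
    + rewrite /ik /= !inordK.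
      * split=> //; congr nth; lia.
      * by rewrite ltnS bnd // (leq_trans (ltn_ord k)).
      * rewrite ltnS bnd //; have := ltn_ord k; lia.
by rewrite card_imset // cardsT card_ord.
Qed.
Lemma same_pair (B : {set {set T}}) (a b m : T) :
  PN B -> [set a; m] \in B -> [set b; m] \in B -> a != m -> a = b.
Proof.
move=> [_ H2] Ha Hb am.
case: (eqVneq [set a; m] [set b; m]) => [E|ne].
  have : a \in [set b; m] by rewrite -E !inE eqxx.
  by rewrite !inE (negbTE am) orbF => /eqP.
have /disjoint_setI0/setP/(_ m) := H2 _ _ Ha Hb ne.
by rewrite !inE !eqxx !orbT.
Qed.

Lemma writ_ne i j : writ i j -> i != j.
Proof. by rewrite /writ; case/orP => /andP[h _]; rewrite ?(ltn_eqF h) // eq_sym ltn_eqF. Qed.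

Lemma max_in_sumbrk (B : {set {set T}}) :
  0 < N -> odd N -> Xminus B -> (ord_max : T) \in sumbrk B.
Proof.
move=> N0 No [s [[HPN [_ [iseq _]]] [_ [Hev Hod]]]].
rewrite /sumbrk mem_symd_big.
have -> : [set p : T * T | inB B p.1 p.2 && ((ord_max : T) \in brk N p.1 p.2)] =
          [set p : T * T | inB B p.1 p.2 && ((p.2 == ord_max) || (p.2 < p.1))].
  apply/setP=> -[i j]; rewrite !inE /=; case Hij: (inB B i j) => //=.
  have wr : writ i j by case/andP: Hij.
  rewrite /brk; case: ltnP => ij.
    rewrite !inE N0 /= ltnNge (ltnW ij) orbF.
    have := ltn_ord i; have := ltn_ord j; rewrite -val_eqE /=; lia.
  have ji : j < i by rewrite ltn_neqAle ij eq_sym writ_ne.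
  by rewrite ji orbT !inE N0 leqnn /= -ltnS ltn_ord.
have key : forall i : T, inB B i ord_max -> [set i; ord_max] \in B.
  by move=> i /andP[].
case: (boolP (odd (hs s))) => ho.
  have [i0 [oi0 Hi0]] := Hod ho.
  have -> : [set p : T * T | inB B p.1 p.2 && ((p.2 == ord_max) || (p.2 < p.1))] =
            [set p : T * T | inB0 B p.1 p.2].
    apply/setP=> -[i j]; rewrite !inE /= /inB0; case Hij: (inB B i j) => //=.
    have wr : writ i j by case/andP: Hij.
    case: (ltnP j i) => ji.
      by move: wr; rewrite /writ ltnNge (ltnW ji) /= ji orbT.
    rewrite orbF; apply/negP => /eqP ej; subst j.
    have ine : i != ord_max by move: wr; apply: contraTN => /eqP ->; rewrite /writ ltnn.
    have := same_pair HPN (key _ Hij) Hi0 ine; move=> E; subst i.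
    move: wr; rewrite /writ; case/orP => /andP[ilt].
      by rewrite oddB ?(ltnW ilt) //= No oi0.
    by rewrite ltnNge ji in ilt.
  by rewrite (card_B0 iseq).
have [i0 [ei0 Hi0]] := Hev ho.
have i0lt : i0 < (ord_max : T).
  rewrite ltn_neqAle -ltnS ltn_ord andbT; apply/eqP => E.
  by move: ei0; rewrite E /= No.
have Hi0' : inB B i0 ord_max.
  by rewrite /inB Hi0 /writ i0lt /= oddB ?(ltnW i0lt) //= No (negbTE ei0).
have -> : [set p : T * T | inB B p.1 p.2 && ((p.2 == ord_max) || (p.2 < p.1))] =
          (i0, ord_max) |: [set p : T * T | inB0 B p.1 p.2].
  apply/setP=> -[i j]; rewrite !inE /= /inB0 xpair_eqE; case Hij: (inB B i j).
    rewrite /=; have wr : writ i j by case/andP: Hij.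
    case: (ltnP j i) => ji.
      have -> : ~~ odd (i - j) by move: wr; rewrite /writ; case/orP => /andP[h1 h2] //; rewrite ltnNge (ltnW ji) in h1.
      by rewrite !orbT.
    rewrite orbF ?andbF ?orbF; apply/idP/idP.
      move=> /eqP ej; subst j.
      have ine : i != ord_max by rewrite (writ_ne wr).
      by rewrite (same_pair HPN (key _ Hij) Hi0 ine) !eqxx.
    by case/andP => _ ->.
  rewrite andFb orbF /=; apply/esym/negbTE/negP => /andP[/eqP ei /eqP ej]; subst i j.
  by rewrite Hi0' in Hij.
rewrite cardsU1 (card_B0 iseq) inE /inB0 /= ltnNge (ltnW i0lt) andbF /=.
by rewrite /= ho.
Qed.
Lemma step (B1 B2 : {set {set T}}) Y :
  0 < N -> odd N -> Xplus B2 -> eps B1 Y -> Y \in span B2 -> Xplus B1.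
Proof.
move=> N0 No [s2 [_ [nm _]]] [[Hm EY]|[[s [H1 [H2 _]]]|[s [u [H1 [H2 _]]]]]].
- move=> Hsp; have := notmax_span nm Hsp; rewrite EY.
  by rewrite (max_in_sumbrk N0 No Hm).
- by move=> _; exists s.
- by move=> _; exists s.
Qed.
End S.

Theorem mainTheorem5 (N : nat) (HN3 : 3 <= N) (HNodd : odd N)
  (B' B : {set {set 'I_N.+1}}) :
  inX B' -> inX B -> preceq B' B -> Xplus B -> Xplus B'.
Proof.
move=> _ _ [h [f [f0 [fh [_ Hf]]]]] HB.
have N0 : 0 < N by apply: leq_trans HN3.
suff : forall m, m <= h -> Xplus (f (h - m)).
  by move/(_ h (leqnn h)); rewrite subnn f0.
elim=> [|m IH] hm; first by rewrite subn0 fh.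
have [Y [E S]] := Hf (h - m.+1) ltac:(lia).
apply: (step N0 HNodd _ E).
  by apply: IH; lia.
have -> : h - m = (h - m.+1).+1 by lia.
exact: S.
Qed.
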